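(* Let $\psi:A_1\to A_2$ be an isomorphism of double quasi-Poisson algebras over $B=\bigoplus_{s\in I}\Bbbk e_s$. If $A_1,A_2$ are quasi-Hamiltonian algebras with multiplicative moment maps $\Phi_1,\Phi_2$, then $\Phi_2=\nu\,\psi(\Phi_1)$ for some $\nu\in B^\times$ (i.e. $\nu=\sum_s\nu_se_s$ with all $\nu_s\in\Bbbk^\times$). In particular, a multiplicative moment map on a double quasi-Poisson algebra is unique up to multiplication by an element of $B^\times$.
   Context: $\Bbbk$ field of characteristic $0$; algebras associative, unital, finitely generated; $B=\bigoplus_{s\in I}\Bbbk e_s$, orthogonal idempotents summing to $1$. Sweedler notation, $(d'\otimes d'')^\circ=d''\otimes d'$, outer bimodule $a(d'\otimes d'')b=ad'\otimes d''b$. $B$-linear double bracket: bilinear $\{\!\{-,-\}\!\}:A\times A\to A\otimes A$, $\{\!\{a,b\}\!\}=-\{\!\{b,a\}\!\}^\circ$, $\{\!\{a,bc\}\!\}=\{\!\{a,b\}\!\}c+b\{\!\{a,c\}\!\}$, zero on $B$. Triple bracket $\{\!\{a,b,c\}\!\}=\{\!\{a,\{\!\{b,c\}\!\}'\}\!\}\otimes\{\!\{b,c\}\!\}''+\tau(\{\!\{b,\{\!\{c,a\}\!\}'\}\!\}\otimes\{\!\{c,a\}\!\}'')+\tau^2(\{\!\{c,\{\!\{a,b\}\!\}'\}\!\}\otimes\{\!\{a,b\}\!\}'')$, $\tau(a_1\otimes a_2\otimes a_3)=a_3\otimes a_1\otimes a_2$. Double quasi-Poisson: $\{\!\{a,b,c\}\!\}=\frac14\sum_s(ce_sa\otimes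 e_sb\otimes e_s-ce_sa\otimes e_s\otimes be_s-ce_s\otimes ae_sb\otimes e_s+ce_s\otimes ae_s\otimes be_s-e_sa\otimes e_sb\otimes e_sc+e_sa\otimes e_s\otimes be_sc+e_s\otimes ae_sb\otimes e_sc-e_s\otimes ae_s\otimes be_sc)$. Multiplicative moment map: invertible $\Phi=\sum_s\Phi_s$, $\Phi_s\in e_sAe_s$, with $\{\!\{\Phi_s,a\}\!\}=\frac12(ae_s\otimes\Phi_s-e_s\otimes\Phi_sa+a\Phi_s\otimes e_s-\Phi_s\otimes e_sa)$ for all $a,s$; quasi-Hamiltonian algebra = double quasi-Poisson algebra with multiplicative moment map. An isomorphism of double quasi-Poisson algebras is a $B$-algebra isomorphism $\psi$ with $\{\!\{\psi a,\psi b\}\!\}_2=(\psi\otimes\psi)\{\!\{a,b\}\!\}_1$. *)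

(* Defs.v *)
From HB Require Import structures.
From mathcomp Require Import all_boot all_order all_algebra.

Set Implicit Arguments.
Unset Strict Implicit.
Unset Printing Implicit Defensive.

Import GRing.Theory.
Local Open Scope ring_scope.

(* An element of A (x)_k A is represented by a formal sum sum_i x_i (x) y_i, *)
(* i.e. a finite list of pairs (scalars are absorbed in the first factor).   *)
(* Two representatives denote the same tensor iff they agree under every     *)
(* k-bilinear map into every k-vector space (universal property of the       *)
(* tensor product); likewise for triple tensors with trilinear maps.         *)

Section Tensors.
Variables (k : fieldType) (A : algType k).

Definition tens2 := seq (A * A).
Definition tens3 := seq (A * A * A).

Definition bilinear_map (V : lmodType k) (f : A -> A -> V) : Prop :=
  (forall (c : k) (x y z : A), f (c *: x + y) z = c *: f x z + f y z) /\
  (forall (c : k) (x y z : A), f z (c *: x + y) = c *: f z x + f z y).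

Definition trilinear_map (V : lmodType k) (f : A -> A -> A -> V) : Prop :=
  [/\ (forall (c : k) (x y u v : A), f (c *: x + y) u v = c *: f x u v + f y u v),
      (forall (c : k) (x y u v : A), f u (c *: x + y) v = c *: f u x v + f u y v)
    & (forall (c : k) (x y u v : A), f u v (c *: x + y) = c *: f u v x + f u v y)].

Definition teq2 (t u : tens2) : Prop :=
  forall (V : lmodType k) (f : A -> A -> V), bilinear_map f ->
    \sum_(p <- t) f p.1 p.2 = \sum_(p <- u) f p.1 p.2.

Definition teq3 (t u : tens3) : Prop :=
  forall (V : lmodType k) (f : A -> A -> A -> V), trilinear_map f ->
    \sum_(p <- t) f p.1.1 p.1.2 p.2 = \sum_(p <- u) f p.1.1 p.1.2 p.2.

Definition topp2 (t : tens2) : tens2 := [seq (- p.1, p.2) | p <- t].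
Definition tswap (t : tens2) : tens2 := [seq (p.2, p.1) | p <- t].
Definition touter (a : A) (t : tens2) (b : A) : tens2 :=
  [seq (a * p.1, p.2 * b) | p <- t].
Definition tscale3 (c : k) (t : tens3) : tens3 :=
  [seq (c *: p.1.1, p.1.2, p.2) | p <- t].
Definition tau3 (t : tens3) : tens3 := [seq (p.2, p.1.1, p.1.2) | p <- t].
Definition tscale2 (c : k) (t : tens2) : tens2 := [seq (c *: p.1, p.2) | p <- t].

Variable dbr : A -> A -> tens2.

Definition br_left (a : A) (t : tens2) : tens3 :=
  flatten [seq [seq (q.1, q.2, p.2) | q <- dbr a p.1] | p <- t].

Definition triple_br (a b c : A) : tens3 :=
  br_left a (dbr b c) ++ tau3 (br_left b (dbr c a))
    ++ tau3 (tau3 (br_left c (dbr a b))).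

End Tensors.

Section BAlgebras.
Variables (k : fieldType) (I : finType) (A : algType k).

Definition fin_gen : Prop :=
  exists gens : seq A, forall P : A -> Prop,
    P 1 -> (forall x, x \in gens -> P x) ->
    (forall (c : k) x, P x -> P (c *: x)) ->
    (forall x y, P x -> P y -> P (x + y)) ->
    (forall x y, P x -> P y -> P (x * y)) ->
    forall a, P a.

(* e : I -> A is a complete family of orthogonal idempotents,
   giving the B-algebra structure B -> A, e_s |-> e s *)
Definition B_structure (e : I -> A) : Prop :=
  (forall s t, e s * e t = if s == t then e s else 0) /\ \sum_(s : I) e s = 1.

Variables (e : I -> A) (dbr : A -> A -> tens2 A).

Definition double_bracket : Prop :=
  [/\ (forall (c : k) x y z, teq2 (dbr (c *: x + y) z) (tscale2 c (dbr x z) ++ dbr y z)),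
      (forall (c : k) x y z, teq2 (dbr z (c *: x + y)) (tscale2 c (dbr z x) ++ dbr z y)),
      (forall a b, teq2 (dbr a b) (topp2 (tswap (dbr b a)))),
      (forall a b c, teq2 (dbr a (b * c)) (touter 1 (dbr a b) c ++ touter b (dbr a c) 1))
    & (forall s a, teq2 (dbr (e s) a) [::])].

Definition neg3 (x y z : A) : A * A * A := (- x, y, z).

Definition qp_term (x a b c : A) : tens3 A :=
  [:: (c * x * a, x * b, x);
      neg3 (c * x * a) x (b * x);
      neg3 (c * x) (a * x * b) x;
      (c * x, a * x, b * x);
      neg3 (x * a) (x * b) (x * c);
      (x * a, x, b * x * c);
      (x, a * x * b, x * c);
      neg3 x (a * x) (b * x * c)].

Definition qp_rhs (a b c : A) : tens3 A :=
  tscale3 (4%:R)^-1 (flatten [seq qp_term (e s) a b c | s <- enum I]).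

Definition double_quasi_Poisson : Prop :=
  double_bracket /\ forall a b c, teq3 (triple_br dbr a b c) (qp_rhs a b c).

Definition invertible (x : A) : Prop := exists y, x * y = 1 /\ y * x = 1.

Definition mult_moment_map (Phi : A) : Prop :=
  invertible Phi /\
  exists Phis : I -> A,
    [/\ forall s, exists x, Phis s = e s * x * e s,
        Phi = \sum_(s : I) Phis s
      & forall s a, teq2 (dbr (Phis s) a)
          (tscale2 (2%:R)^-1
             [:: (a * e s, Phis s); (- e s, Phis s * a);
                 (a * Phis s, e s); (- Phis s, e s * a)])].

End BAlgebras.

Definition dqp_iso (k : fieldType) (I : finType) (A1 A2 : algType k)
  (e1 : I -> A1) (e2 : I -> A2) (dbr1 : A1 -> A1 -> tens2 A1)
  (dbr2 : A2 -> A2 -> tens2 A2) (psi : A1 -> A2) : Prop :=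
  [/\ (forall (c : k) x y, psi (c *: x + y) = c *: psi x + psi y),
      (forall x y, psi (x * y) = psi x * psi y),
      psi 1 = 1,
      bijective psi /\
      (forall s, psi (e1 s) = e2 s)
    & (forall a b, teq2 (dbr2 (psi a) (psi b))
                        [seq (psi p.1, psi p.2) | p <- dbr1 a b])].

(* Main.v *)
Require Import Defs.
From HB Require Import structures.
From mathcomp Require Import all_boot all_order all_algebra.
From mathcomp Require Import boolp classical_sets.
Import GRing.Theory.
Local Open Scope ring_scope.
Set Implicit Arguments.
Unset Strict Implicit.

Lemma exists_functional (k : fieldType) (V : lmodType k) (w : V) : w != 0 ->
  exists phi : V -> k,
    (forall (c : k) (x y : V), phi (c *: x + y) = c * phi x + phi y) /\ phi w = 1.
Proof.
move=> w0.
pose P := fun H : set V =>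
  (forall (c : k) x y, H x -> H y -> H (c *: x + y)) /\ ~ H w.
have [A0 [[A0cl A0w] A0max]] : exists A, P A /\ forall B, (A `<` B)%classic -> ~ P B.
  apply: Zorn_bigcup => F FP Ftot; split.
    move=> c x y [X FX Xx] [Y FY Yy].
    have [XY|YX] := Ftot _ _ FX FY.
      exists Y => //; apply: (FP _ FY).1 => //; exact: XY.
    exists X => //; apply: (FP _ FX).1 => //; exact: YX.
  by move=> [X FX Xw]; exact: (FP _ FX).2.
have A00 : A0 0.
  apply: contrapT => nA0.
  have emp : forall h, ~ A0 h.
    by move=> h Ah; apply: nA0; rewrite -(addNr h) -scaleN1r; exact: A0cl.
  apply: (A0max (fun z : V => z = 0)); last first.
    split; first by move=> c x y -> ->; rewrite scaler0 addr0.
    by move=> /= wE; move: w0; rewrite wE eqxx.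
  split; first by move=> x /emp.
  by move=> /(_ 0 erefl).
have A0lin : forall c x y, A0 x -> A0 y -> A0 (c *: x + y) := A0cl.
have A0N : forall x, A0 x -> A0 (- x).
  by move=> x Ax; rewrite -scaleN1r -[_ *: x]addr0; exact: A0cl.
have A0D : forall x y, A0 x -> A0 y -> A0 (x + y).
  by move=> x y Ax Ay; rewrite -[x]scale1r; exact: A0cl.
have A0Z : forall c x, A0 x -> A0 (c *: x).
  by move=> c x Ax; rewrite -[_ *: x]addr0; exact: A0cl.
have ex : forall a, exists c, A0 (a - c *: w).
  move=> a; apply: contrapT => na.
  have na' : forall c, ~ A0 (a - c *: w) by move=> c Ac; apply: na; exists c.
  pose B := fun z => exists h d, A0 h /\ z = h + d *: a.
  apply: (A0max B).
    split.
      by move=> h Ah; exists h, 0; rewrite scale0r addr0.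
    move=> /(_ a) Ha; apply: (na' 0); rewrite scale0r subr0; apply: Ha.
    by exists 0, 1; rewrite scale1r add0r.
  split.
    move=> c x y [h1 [d1 [Ah1 ->]]] [h2 [d2 [Ah2 ->]]].
    exists (c *: h1 + h2), (c * d1 + d2); split; first exact: A0cl.
    by rewrite scalerDr scalerDl scalerA; rewrite addrACA.
  move=> [h [d [Ah wE]]].
  have [d0|dn0] := eqVneq d 0.
    by apply: A0w; move: wE; rewrite d0 scale0r addr0 => ->.
  apply: (na' d^-1); rewrite wE scalerDr scalerA mulVf // scale1r.
  rewrite opprD addrCA subrr addr0; apply: A0N; exact: A0Z.
have uniq : forall a c c', A0 (a - c *: w) -> A0 (a - c' *: w) -> c = c'.
  move=> a c c' Ac Ac'; apply/eqP; apply: contrapT => /eqP cc.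
  have H1 : A0 ((c' - c) *: w).
    have -> : (c' - c) *: w = (a - c *: w) - (a - c' *: w).
      by rewrite scalerBl opprB [RHS]addrC addrA subrK.
    by apply: A0D => //; exact: A0N.
  apply: A0w; have := A0Z (c' - c)^-1 _ H1.
  rewrite scalerA mulVf ?scale1r // subr_eq0; apply/eqP => E; by move: cc; rewrite E eqxx.
pose phi a := proj1_sig (cid (ex a)).
have phiP a : A0 (a - phi a *: w) := proj2_sig (cid (ex a)).
exists phi; split.
  move=> c x y; apply: (uniq (c *: x + y)); first exact: phiP.
  have -> : c *: x + y - (c * phi x + phi y) *: w
    = c *: (x - phi x *: w) + (y - phi y *: w).
    by rewrite scalerBr scalerDl scalerA opprD addrACA.
  by apply: A0cl; exact: phiP.
by apply: (uniq w); [exact: phiP | rewrite scale1r subrr].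
Qed.

Section Gen.
Variables (k : fieldType) (A : algType k).

Lemma bil0l {V : lmodType k} {f : A -> A -> V} : bilinear_map f -> forall v, f 0 v = 0.
Proof. by move=> [fl _] v; have := fl 1 0 0 v; rewrite scaler0 addr0 scale1r => /eqP; rewrite -subr_eq0 opprD addrA subrr add0r oppr_eq0 => /eqP. Qed.

Lemma bil0r {V : lmodType k} {f : A -> A -> V} : bilinear_map f -> forall v, f v 0 = 0.
Proof. by move=> [_ fr] v; have := fr 1 0 0 v; rewrite scaler0 addr0 scale1r => /eqP; rewrite -subr_eq0 opprD addrA subrr add0r oppr_eq0 => /eqP. Qed.

Lemma bilZl {V : lmodType k} {f : A -> A -> V} : bilinear_map f ->
  forall c u v, f (c *: u) v = c *: f u v.
Proof. by move=> fb c u v; have := fb.1 c u 0 v; rewrite addr0 (bil0l fb) addr0. Qed.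

Lemma bilZr {V : lmodType k} {f : A -> A -> V} : bilinear_map f ->
  forall c u v, f v (c *: u) = c *: f v u.
Proof. by move=> fb c u v; have := fb.2 c u 0 v; rewrite addr0 (bil0r fb) addr0. Qed.

Lemma bilNl {V : lmodType k} {f : A -> A -> V} : bilinear_map f ->
  forall u v, f (- u) v = - f u v.
Proof. by move=> fb u v; rewrite -[- u]scaleN1r (bilZl fb) scaleN1r. Qed.

Lemma bilNr {V : lmodType k} {f : A -> A -> V} : bilinear_map f ->
  forall u v, f v (- u) = - f v u.
Proof. by move=> fb u v; rewrite -[- u]scaleN1r (bilZr fb) scaleN1r. Qed.

Lemma bil_swap {V : lmodType k} {f : A -> A -> V} : bilinear_map f ->
  bilinear_map (fun u v => f v u).
Proof. by move=> [fl fr]; split=> c x y z; [rewrite fr | rewrite fl]. Qed.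

Lemma sum_oppswap {V : lmodType k} {f : A -> A -> V} (l : tens2 A) : bilinear_map f ->
  \sum_(p <- topp2 (tswap l)) f p.1 p.2 = - \sum_(p <- l) f p.2 p.1.
Proof.
move=> fb; rewrite /topp2 /tswap big_map big_map /= -sumrN.
by apply: eq_bigr => p _; rewrite (bilNl fb).
Qed.

Definition mform (e P a : A) : tens2 A :=
  tscale2 (2%:R)^-1 [:: (a * e, P); (- e, P * a); (a * P, e); (- P, e * a)].

Lemma endlin {V : lmodType k} {h : k} {X Y Z W : V} : h != 0 -> (2%:R : k) != 0 ->
  h *: X + (- (h *: Y) + (h *: Z + - (h *: W))) = - (h *: X + (- (h *: Z) + (h *: Y + - (h *: W)))) -> X = W.
Proof.
move=> h0 t0; rewrite !addrA -!scalerBr -!scalerDr -!scalerBr => /eqP.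
rewrite -subr_eq0 opprK -scalerDr scaler_eq0 (negbTE h0) /=.
rewrite addrACA [X - Y + Z + _]addrACA [X - Y + _]addrACA (addrC Z Y) -[X + X + _ + _]addrA -opprD addNr addr0 -opprD.
rewrite -!mulr2n -mulrnBl -scaler_nat scaler_eq0 (negbTE t0) /= subr_eq0.
by move/eqP.
Qed.

Lemma key (e P Q : A) (dbr : A -> A -> tens2 A) :
  (2%:R : k) != 0 ->
  (forall a b, teq2 (dbr a b) (topp2 (tswap (dbr b a)))) ->
  P * e = P -> e * P = P -> Q * e = Q -> e * Q = Q ->
  (forall a, teq2 (dbr P a) (mform e P a)) ->
  (forall a, teq2 (dbr Q a) (mform e Q a)) ->
  forall (V : lmodType k) (f : A -> A -> V), bilinear_map f -> f P Q = f Q P.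
Proof.
move=> t0 anti Pe eP Qe eQ hP hQ V f fb.
have E1 := hQ P V f fb.
have E2 := anti Q P V f fb.
have E3 := hP Q V (fun u v => f v u) (bil_swap fb).
rewrite sum_oppswap // E3 in E2; rewrite E2 in E1; move: E1.
rewrite /mform /tscale2 /= !big_cons !big_nil /=.
rewrite !(bilZl fb) !(bilZr fb) !(bilNl fb) !(bilNr fb) Pe Qe eP eQ !addr0 => E.
have h0 : (2%:R : k)^-1 != 0 by rewrite invr_eq0.
rewrite !scalerN in E; apply: (endlin h0 t0); exact: esym E.
Qed.
End Gen.

Lemma eproj (k : fieldType) (I : finType) (A : algType k) (e : I -> A) (Ps : I -> A) :
  B_structure e -> (forall s, exists x, Ps s = e s * x * e s) ->
  forall t, e t * \sum_(s : I) Ps s = Ps t.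
Proof.
move=> [eo _] hP t; rewrite mulr_sumr (bigD1 t) //= big1 ?addr0.
  by have [x ->] := hP t; rewrite !mulrA eo eqxx.
move=> s st; have [x ->] := hP s; rewrite !mulrA eo.
by rewrite eq_sym (negbTE st) !mul0r.
Qed.

Lemma ezero (k : fieldType) (A : algType k) (e Phi y : A) :
  Phi * y = 1 -> e * Phi = 0 -> e = 0.
Proof. by move=> Py eP; rewrite -[e]mulr1 -Py mulrA eP mul0r. Qed.

Unset Implicit Arguments.
Set Strict Implicit.

Theorem mainTheorem14 (k : fieldType) (I : finType) (A1 A2 : algType k)
  (e1 : I -> A1) (e2 : I -> A2)
  (dbr1 : A1 -> A1 -> tens2 A1) (dbr2 : A2 -> A2 -> tens2 A2)
  (psi : A1 -> A2) (Phi1 : A1) (Phi2 : A2) :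
  [pchar k] =i pred0 ->
  fin_gen A1 -> fin_gen A2 ->
  B_structure e1 -> B_structure e2 ->
  double_quasi_Poisson e1 dbr1 -> double_quasi_Poisson e2 dbr2 ->
  dqp_iso e1 e2 dbr1 dbr2 psi ->
  mult_moment_map e1 dbr1 Phi1 -> mult_moment_map e2 dbr2 Phi2 ->
  exists nu : I -> k,
    (forall s, nu s != 0) /\ Phi2 = (\sum_(s : I) nu s *: e2 s) * psi Phi1.
Proof.
move=> ch _ _ B1 B2 _ [[_ _ anti2 _ _] _]
  [psiL psiM psi1 [[psiinv psiK psiK'] psie] psibr]
  [[y1 [Phi1y _]] [Ph1 [Ph1e Ph1s Ph1m]]] [[y2 [Phi2y _]] [Ph2 [Ph2e Ph2s Ph2m]]].
have t0 : (2%:R : k) != 0.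
  by move/pcharf0P: ch => ->.
have psi0 : psi 0 = 0.
  by have := psiL 1 0 0; rewrite scaler0 addr0 scale1r => /eqP; rewrite -subr_eq0 opprD addrA subrr add0r oppr_eq0 => /eqP.
have psiZ c x : psi (c *: x) = c *: psi x by rewrite -[c *: x]addr0 psiL psi0 addr0.
have psiD x y : psi (x + y) = psi x + psi y by rewrite -[x]scale1r psiL !scale1r.
have psiN x : psi (- x) = - psi x by rewrite -scaleN1r psiZ scaleN1r.
pose P t := psi (Ph1 t).
have Pe t : exists x, P t = e2 t * x * e2 t.
  by rewrite /P; have [x ->] := Ph1e t; exists (psi x); rewrite !psiM psie.
have Psum : psi Phi1 = \sum_(s : I) P s.
  by rewrite Ph1s; apply: (big_morph psi psiD psi0).
have PhiPy : psi Phi1 * psi y1 = 1 by rewrite -psiM Phi1y psi1.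
have hP t a : teq2 (dbr2 (P t) a) (mform (e2 t) (P t) a).
  move=> V f fb; rewrite -(psiK' a); set a' := psiinv a.
  rewrite (psibr (Ph1 t) a' V f fb) big_map.
  have fb' : bilinear_map (fun u v => f (psi u) (psi v)).
    by split=> c x y z; rewrite psiL; [rewrite fb.1 | rewrite fb.2].
  rewrite (Ph1m t a' V _ fb') /mform /tscale2 /= !big_cons !big_nil /=.
  by rewrite !psiZ !psiN !psiM psie.
have hQ t a : teq2 (dbr2 (Ph2 t) a) (mform (e2 t) (Ph2 t) a) := Ph2m t a.
have ee t : e2 t * e2 t = e2 t by rewrite B2.1 eqxx.
have sides t (X : A2) : (exists x, X = e2 t * x * e2 t) -> X * e2 t = X /\ e2 t * X = X.
  move=> [x ->]; split; first by rewrite -!mulrA ee.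
  by rewrite !mulrA ee.
have comm t (V : lmodType k) (f : A2 -> A2 -> V) : bilinear_map f -> f (P t) (Ph2 t) = f (Ph2 t) (P t).
  have [Pe1 Pe2] := sides t _ (Pe t); have [Qe1 Qe2] := sides t _ (Ph2e t).
  exact: (key t0 anti2 Pe1 Pe2 Qe1 Qe2 (hP t) (hQ t)).
have e2P t : e2 t * psi Phi1 = P t by rewrite Psum (eproj B2 Pe).
have e2Q t : e2 t * Phi2 = Ph2 t by rewrite Ph2s (eproj B2 Ph2e).
have nuex t : exists c : k, c != 0 /\ Ph2 t = c *: P t.
  have [P0|Pn0] := eqVneq (P t) 0.
    have et0 : e2 t = 0 by apply: (ezero PhiPy); rewrite e2P.
    exists 1; rewrite oner_neq0 scale1r P0; split => //.
    by have [x ->] := Ph2e t; rewrite et0 !mul0r.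
  have [phi [phil phi1]] := exists_functional Pn0.
  pose f (u v : A2) := phi u *: v.
  have fb : bilinear_map f.
    split=> c x y z; rewrite /f; first by rewrite phil scalerDl scalerA.
    by rewrite scalerDr !scalerA mulrC.
  have := comm t _ f fb; rewrite /f phi1 scale1r => E.
  exists (phi (Ph2 t)); split => //.
  apply/negP => /eqP c0; move: E; rewrite c0 scale0r => Q0.
  have et0 : e2 t = 0 by apply: (ezero Phi2y); rewrite e2Q.
  by move: Pn0; have [x ->] := Pe t; rewrite et0 !mul0r eqxx.
pose nu t := proj1_sig (cid (nuex t)).
exists nu; split; first by move=> s; exact: (proj2_sig (cid (nuex s))).1.
rewrite Ph2s mulr_suml; apply: eq_bigr => s _.
by rewrite -scalerAl e2P (proj2_sig (cid (nuex s))).2.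
Qed.
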